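(* Let $n\ge 1$ and consider $n$ qubits, labelled $1,\dots,n$. Let $$\mathcal{P}_n=\{I,X,Y,Z\}^{\otimes n}\setminus\{I^{\otimes n}\}$$ be the set of non-identity $n$-qubit Pauli products, where $I$ is the $2\times 2$ identity and $X,Y,Z$ are the Pauli matrices. Let $$\mathcal{O}=\{X,Y\}\otimes\{I,Z\}^{\otimes(n-1)}$$ be the set of operators observable in a single experiment (qubit $1$ is the probe qubit). Let $R_x=e^{-i\pi X/4}$ and $R_y=e^{-i\pi Y/4}$ be the $\pi/2$ rotations about the $x$ and $y$ axes, and for $j\in\{1,\dots,n\}$ let $W_{1j}$ be the SWAP gate exchanging qubits $1$ and $j$ (with $W_{11}=I^{\otimes n}$). Let the set of available readout operations be $$\mathcal{U}=\{\,V W_{1j} : V\in\{I,R_x,R_y\}^{\otimes n},\ j=1,\dots,n\,\}.$$ For $U\in\mathcal{U}$ let $S_U=\{UOU^\dagger : O\in\mathcal{O}\}$, where each $UOU^\dagger$ is an element of $\mathcal{P}_n$ up to a sign, and these elements are identified with elements of $\mathcal{P}_n$ by ignoring the sign. Let $f^*_n$ be the minimum cardinality of a subset $\mathcal{U}'\subseteq\mathcal{U}$ such that $\bigcup_{U\in\mathcal{U}'}S_U=\mathcal{P}_n$. Then $$f^*_n=\frac{3^n+1}{2}.$$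
   Context: This formalizes quantum state tomography via a single probe qubit: each readout operation $U$ corresponds to one experiment, which reveals the expectation values of the Pauli operators in $S_U$. Full tomography requires every element of $\mathcal{P}_n$ to be covered, and $f^*_n$ is the minimum number of experiments needed. *)

(* Defs.v *)
From HB Require Import structures.
From mathcomp Require Import all_boot all_order all_algebra.
From mathcomp Require Import algC.
Set Implicit Arguments. Unset Strict Implicit. Unset Printing Implicit Defensive.
Import Order.TTheory GRing.Theory Num.Theory.
Local Open Scope ring_scope.

Inductive pauli := PI | PX | PY | PZ.
Inductive gate := GI | GRx | GRy.

(* Computational basis |0> = false, |1> = true; entry (a, b) = row a, column b. *)
Definition pauli_mx (P : pauli) (a b : bool) : algC :=
  match P with
  | PI => (a == b)%:R
  | PX => (a != b)%:R
  | PY => if a == b then 0 else if b then - 'i else 'i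
  | PZ => if a == b then (if a then -1 else 1) else 0
  end.

(* R_x = exp(-i pi X/4) = (I - i X)/sqrt 2 ;  R_y = exp(-i pi Y/4) = (I - i Y)/sqrt 2 *)
Definition gate_mx (g : gate) (a b : bool) : algC :=
  match g with
  | GI => pauli_mx PI a b
  | GRx => (pauli_mx PI a b - 'i * pauli_mx PX a b) / sqrtC 2
  | GRy => (pauli_mx PI a b - 'i * pauli_mx PY a b) / sqrtC 2
  end.

(* n-qubit computational basis states and operators (2^n x 2^n matrices,
   indexed by basis states). *)
Definition basis n := {ffun 'I_n -> bool}.
Definition op n := {ffun basis n * basis n -> algC}.

Definition mulop n (A B : op n) : op n :=
  [ffun p => \sum_(z : basis n) A (p.1, z) * B (z, p.2)].
Definition adjop n (A : op n) : op n := [ffun p => (A (p.2, p.1))^*].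
Definition oppop n (A : op n) : op n := [ffun p => - A p].

Definition tensop n (F : 'I_n -> bool -> bool -> algC) : op n :=
  [ffun p : basis n * basis n => \prod_(k < n) F k (p.1 k) (p.2 k)].

Definition pauli_op n (s : 'I_n -> pauli) : op n :=
  tensop (fun k => pauli_mx (s k)).

(* SWAP of qubits p0 and j:  W |y> = |y o tau>, tau the transposition (p0 j). *)
Definition swap_idx n (p0 j k : 'I_n) : 'I_n :=
  if k == p0 then j else if k == j then p0 else k.
Definition swap_op n (p0 j : 'I_n) : op n :=
  [ffun p : basis n * basis n =>
     (p.1 == [ffun k => p.2 (swap_idx p0 j k)])%:R].

Definition readout n (p0 : 'I_n) (V : 'I_n -> gate) (j : 'I_n) : op n :=
  mulop (tensop (fun k => gate_mx (V k))) (swap_op p0 j).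

Definition is_readout n (p0 : 'I_n) (U : op n) : Prop :=
  exists (V : 'I_n -> gate) (j : 'I_n), U = readout p0 V j.

Definition observable n (p0 : 'I_n) (o : 'I_n -> pauli) : Prop :=
  (o p0 = PX \/ o p0 = PY) /\ (forall k, k != p0 -> o k = PI \/ o k = PZ).

Definition nonidentity n (s : 'I_n -> pauli) : Prop := exists k, s k <> PI.

Definition in_S n (p0 : 'I_n) (U : op n) (s : 'I_n -> pauli) : Prop :=
  nonidentity s /\
  exists o, observable p0 o /\
    (mulop (mulop U (pauli_op o)) (adjop U) = pauli_op s \/
     mulop (mulop U (pauli_op o)) (adjop U) = oppop (pauli_op s)).

(* A finite subset U' of the readout operations (a duplicate-free list)
   whose S_U cover P_n. *)
Definition is_cover n (p0 : 'I_n) (L : seq (op n)) : Prop :=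
  [/\ uniq L,
      (forall U, U \in L -> is_readout p0 U) &
      (forall s, nonidentity s -> exists2 U, U \in L & in_S p0 U s)].

Definition min_cover_card n (p0 : 'I_n) (N : nat) : Prop :=
  (exists L, is_cover p0 L /\ size L = N) /\
  (forall L, is_cover p0 L -> (N <= size L)%N).

(* Main.v *)
Require Import Defs.
From mathcomp Require Import all_boot all_order all_algebra.
From mathcomp Require Import algC.
From HB Require Import structures.
From mathcomp Require Import ring zify.
From Stdlib Require Import ClassicalEpsilon.
Set Implicit Arguments. Unset Strict Implicit. Unset Printing Implicit Defensive.
Import Order.TTheory GRing.Theory Num.Theory.
Local Open Scope ring_scope.

Lemma cB (x y : algC) : (x - y)^* = x^* - y^*. Proof. exact: rmorphB. Qed.
Lemma cM (x y : algC) : (x * y)^* = x^* * y^*. Proof. exact: rmorphM. Qed.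
Lemma cN (x : algC) : (- x)^* = - x^*. Proof. exact: rmorphN. Qed.
Lemma cV (x : algC) : (x^-1)^* = (x^*)^-1. Proof. exact: fmorphV. Qed.
Lemma c1 : (1 : algC)^* = 1. Proof. exact: rmorph1. Qed.
Lemma c0 : (0 : algC)^* = 0. Proof. exact: rmorph0. Qed.
Lemma cnat k : (k%:R : algC)^* = k%:R. Proof. exact: rmorph_nat. Qed.
Lemma cS (I : Type) (r : seq I) (P : pred I) (F : I -> algC) :
  (\sum_(i <- r | P i) F i)^* = \sum_(i <- r | P i) (F i)^*.
Proof. exact: rmorph_sum. Qed.
Lemma cP (I : Type) (r : seq I) (P : pred I) (F : I -> algC) :
  (\prod_(i <- r | P i) F i)^* = \prod_(i <- r | P i) (F i)^*.
Proof. exact: rmorph_prod. Qed.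

Lemma mulopA n (A B C : op n) : mulop (mulop A B) C = mulop A (mulop B C).
Proof.
apply/ffunP=> p; rewrite !ffunE /=.
under eq_bigr => z _ do rewrite ffunE /= big_distrl /=.
rewrite exchange_big /=; apply: eq_bigr => w _.
rewrite ffunE /= big_distrr /=; apply: eq_bigr => z _.
by rewrite mulrA.
Qed.

Lemma adjop_mul n (A B : op n) : adjop (mulop A B) = mulop (adjop B) (adjop A).
Proof.
apply/ffunP=> p; rewrite !ffunE /= cS; apply: eq_bigr => z _.
by rewrite !ffunE /= cM mulrC.
Qed.

Lemma mul_tens n (F G : 'I_n -> bool -> bool -> algC) :
  mulop (tensop F) (tensop G) =
  tensop (fun k a b => \sum_(c : bool) F k a c * G k c b).
Proof.
apply/ffunP=> p; rewrite !ffunE /= bigA_distr_bigA /=.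
apply: eq_bigr => z _; rewrite !ffunE /= -big_split /=.
by [].
Qed.

Lemma adj_tens n (F : 'I_n -> bool -> bool -> algC) :
  adjop (tensop F) = tensop (fun k a b => (F k b a)^*).
Proof. by apply/ffunP=> p; rewrite !ffunE /= cP. Qed.

Lemma swap_idxK n (p0 j k : 'I_n) : swap_idx p0 j (swap_idx p0 j k) = k.
Proof.
rewrite /swap_idx.
case: (eqVneq k p0) => [->|hk0].
  rewrite eqxx; case: (eqVneq j p0) => [->|hj]; first by rewrite ?eqxx.
  by rewrite ?eqxx.
case: (eqVneq k j) => [->|hkj]; first by rewrite ?eqxx.
by rewrite (negbTE hk0) (negbTE hkj).
Qed.

Lemma swap_idx_inj n (p0 j : 'I_n) : injective (swap_idx p0 j).
Proof. exact: (can_inj (@swap_idxK n p0 j)). Qed.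

Lemma swap_idx_p0 n (p0 j k : 'I_n) : (swap_idx p0 j k == p0) = (k == j).
Proof.
apply/eqP/eqP => [h|->].
  by rewrite -(swap_idxK p0 j k) h /swap_idx eqxx.
rewrite /swap_idx; case: (eqVneq j p0) => [->|h]; first by [].
by rewrite eqxx.
Qed.

Definition sw n (p0 j : 'I_n) (x : basis n) : basis n := [ffun k => x (swap_idx p0 j k)].

Lemma swK n (p0 j : 'I_n) x : sw p0 j (sw p0 j x) = x.
Proof. by apply/ffunP=> k; rewrite !ffunE swap_idxK. Qed.

Lemma swap_conj n (p0 j : 'I_n) (O : op n) :
  mulop (mulop (swap_op p0 j) O) (adjop (swap_op p0 j)) =
  [ffun p => O (sw p0 j p.1, sw p0 j p.2)].
Proof.
have key : forall (x : basis n) (G : basis n -> algC),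
    \sum_(w : basis n) (x == sw p0 j w)%:R * G w = G (sw p0 j x).
  move=> x G; rewrite (bigD1 (sw p0 j x)) //= swK eqxx mul1r big1 ?addr0 //.
  move=> w hw; case: eqP => [hx|]; last by rewrite mul0r.
  by move: hw; rewrite hx swK eqxx.
apply/ffunP=> p; rewrite [in RHS]ffunE [LHS]ffunE /=.
have hz : forall z, mulop (swap_op p0 j) O (p.1, z) = O (sw p0 j p.1, z).
  by move=> z; rewrite ffunE /=; under eq_bigr => w _ do rewrite ffunE /=; rewrite key.
under eq_bigr => z _ do rewrite hz !ffunE /= cnat mulrC.
by rewrite key.
Qed.

Lemma tens_sw n (p0 j : 'I_n) (F : 'I_n -> bool -> bool -> algC) :
  [ffun p => tensop F (sw p0 j p.1, sw p0 j p.2)] =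
  tensop (fun k => F (swap_idx p0 j k)).
Proof.
apply/ffunP=> p; rewrite !ffunE /=.
rewrite (reindex_inj (@swap_idx_inj n p0 j)) /=.
by apply: eq_bigr => k _; rewrite !ffunE swap_idxK.
Qed.

Definition cg (g : gate) (P : pauli) : pauli :=
  match g, P with
  | GRx, PY => PZ | GRx, PZ => PY
  | GRy, PX => PZ | GRy, PZ => PX
  | _, _ => P end.
Definition sg (g : gate) (P : pauli) : algC :=
  match g, P with
  | GRx, PZ => -1 | GRy, PX => -1 | _, _ => 1 end.

Lemma s2 : sqrtC 2 * sqrtC 2 = 2 :> algC.
Proof. by rewrite -expr2 sqrtCK. Qed.
Lemma s2c : (sqrtC 2)^* = sqrtC 2 :> algC.
Proof. by apply/CrealP; rewrite realE sqrtC_ge0 ler0n. Qed.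
Lemma ii : 'i * 'i = -1 :> algC.
Proof. by rewrite -expr2 sqrCi. Qed.
Lemma ht : 2 * ((sqrtC 2)^-1 * (sqrtC 2)^-1) = 1 :> algC.
Proof. by rewrite -invfM s2 mulfV // pnatr_eq0. Qed.

Lemma qubit g P a b :
  \sum_(c : bool) \sum_(d : bool) gate_mx g a c * pauli_mx P c d * (gate_mx g b d)^*
  = sg g P * pauli_mx (cg g P) a b.
Proof.
have h1 := ht; have h3 := ii.
rewrite !big_bool.
case: g; case: P; case: a; case: b;
rewrite /= ?(cB, cM, cN, cV, c1, c0, s2c, conjCi).
all: try (ring; fail).
all: move: (sqrtC 2)^-1 h1 => t h1.
all: try (ring: h1 h3; fail).
all: try (transitivity (-'i * (2 * (t*t))); [ring: h3 | rewrite h1; ring]; fail).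
all: try (transitivity ('i * (2 * (t*t))); [ring: h3 | rewrite h1; ring]; fail).
Qed.

Definition Fo n (p0 : 'I_n) (V : 'I_n -> gate) (j : 'I_n) (o : 'I_n -> pauli) :=
  fun k => cg (V k) (o (swap_idx p0 j k)).
Definition eps n (p0 : 'I_n) (V : 'I_n -> gate) (j : 'I_n) (o : 'I_n -> pauli) :=
  \prod_k sg (V k) (o (swap_idx p0 j k)).

Lemma conjU n (p0 : 'I_n) V j o :
  mulop (mulop (readout p0 V j) (pauli_op o)) (adjop (readout p0 V j)) =
  [ffun p => eps p0 V j o * pauli_op (Fo p0 V j o) p].
Proof.
rewrite /readout adjop_mul !mulopA -[mulop (swap_op p0 j) (mulop (pauli_op o) _)]mulopA.
rewrite -[mulop (mulop (swap_op p0 j) (pauli_op o)) _]mulopA swap_conj.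
rewrite /pauli_op tens_sw adj_tens !mul_tens.
apply/ffunP=> p; rewrite !ffunE /= -big_split /=; apply: eq_bigr => k _.
rewrite -qubit; apply: eq_bigr => c _; rewrite big_distrr /=.
by apply: eq_bigr => d _; rewrite mulrA.
Qed.

Lemma eps_pm n (p0 : 'I_n) V j o : eps p0 V j o = 1 \/ eps p0 V j o = -1.
Proof.
rewrite /eps; apply: (big_ind (fun x : algC => x = 1 \/ x = -1)).
- by left.
- by move=> x y [->|->] [->|->]; rewrite ?mulr1 ?mulrN1 ?opprK; auto.
- by move=> k _; case: (V k); case: (o _); auto.
Qed.

Lemma aux2 (l r K : algC) : l = r -> l = 0 -> r = 2 * K -> K = 0.
Proof.
move=> -> -> /esym/eqP; rewrite mulf_eq0 pnatr_eq0 /= => /eqP //.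
Qed.

Lemma pauli_scal P P' (x K : algC) : K != 0 ->
  (forall a b, pauli_mx P a b * x = K * pauli_mx P' a b) -> P = P'.
Proof.
move=> hK H.
have e : \sum_(a : bool) \sum_(b : bool) pauli_mx P a b * x * (pauli_mx P' a b)^* =
         \sum_(a : bool) \sum_(b : bool) K * pauli_mx P' a b * (pauli_mx P' a b)^*.
  by apply: eq_bigr => a _; apply: eq_bigr => b _; rewrite H.
have h3 := ii.
clear H; move: e; rewrite !big_bool.
case: P; case: P'; move=> /= e //.

all: rewrite ?cN ?c1 ?c0 ?conjCi in e.
all: by move: hK; rewrite (@aux2 _ _ K e); [rewrite eqxx | ring: h3 | ring: h3].
Qed.

Lemma pauli_opE n (s : 'I_n -> pauli) p :
  pauli_op s p = \prod_k pauli_mx (s k) (p.1 k) (p.2 k).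
Proof. by rewrite ffunE. Qed.

Definition rr (P : pauli) : bool := false.
Definition cc (P : pauli) : bool := match P with PX | PY => true | _ => false end.

Lemma pauli_rc_neq0 P : pauli_mx P (rr P) (cc P) != 0.
Proof. by case: P; rewrite /= ?oppr_eq0 ?oner_eq0 ?neq0Ci. Qed.

Lemma pauli_inj n (s s' : 'I_n -> pauli) (K : algC) : K != 0 ->
  (forall p, pauli_op s p = K * pauli_op s' p) -> forall k, s k = s' k.
Proof.
move=> hK H k.
pose q (a b : bool) : basis n * basis n :=
  ([ffun l => if l == k then a else rr (s' l)], [ffun l => if l == k then b else cc (s' l)]).
pose Rs := \prod_(l | l != k) pauli_mx (s l) (rr (s' l)) (cc (s' l)).
pose Rs' := \prod_(l | l != k) pauli_mx (s' l) (rr (s' l)) (cc (s' l)).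
have hR : Rs' != 0.
  by apply/prodf_neq0 => l _; exact: pauli_rc_neq0.
apply: (@pauli_scal _ _ Rs (K * Rs')); first by rewrite mulf_neq0.
move=> a b.
have E : forall t : 'I_n -> pauli, pauli_op t (q a b) =
    pauli_mx (t k) a b * \prod_(l | l != k) pauli_mx (t l) (rr (s' l)) (cc (s' l)).
  move=> t; rewrite pauli_opE (bigD1 k) //= !ffunE eqxx; congr (_ * _).
  by apply: eq_bigr => l /negbTE hl; rewrite !ffunE hl.
have := H (q a b); rewrite !E -/Rs -/Rs' => ->.
ring.
Qed.

Lemma pauli_op_ext n (s s' : 'I_n -> pauli) : s =1 s' -> pauli_op s = pauli_op s'.
Proof. by move=> h; apply/ffunP=> p; rewrite !ffunE; apply: eq_bigr => k _; rewrite h. Qed.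

Lemma eps_neq0 n (p0 : 'I_n) V j o : eps p0 V j o != 0.
Proof. by case: (eps_pm p0 V j o) => ->; rewrite ?oppr_eq0 oner_eq0. Qed.

Lemma in_S_cover n (p0 : 'I_n) V j s : nonidentity s ->
  (exists o, observable p0 o /\ forall k, s k = Fo p0 V j o k) ->
  in_S p0 (readout p0 V j) s.
Proof.
move=> hs [o [ho hk]]; split=> //; exists o; split=> //.
rewrite conjU (pauli_op_ext hk).
case: (eps_pm p0 V j o) => ->; [left|right]; apply/ffunP => p; rewrite !ffunE ?mul1r //.
by rewrite mulN1r.
Qed.

Lemma in_S_inv n (p0 : 'I_n) V j s : in_S p0 (readout p0 V j) s ->
  exists o, observable p0 o /\ forall k, s k = Fo p0 V j o k.
Proof.
move=> [_ [o [ho he]]]; exists o; split=> //.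
rewrite conjU in he.
have hE := eps_neq0 p0 V j o.
case: he => he.
  apply: (@pauli_inj _ _ _ (eps p0 V j o)) => // p.
  by rewrite -he ffunE.
apply: (@pauli_inj _ _ _ (- eps p0 V j o)); first by rewrite oppr_eq0.
move=> p; move/ffunP: he => /(_ p); rewrite !ffunE => he.
by rewrite mulNr he opprK.
Qed.

Local Close Scope ring_scope.

Definition p2o (P : pauli) : 'I_4 :=
  match P with PI => @Ordinal 4 0 isT | PX => @Ordinal 4 1 isT | PY => @Ordinal 4 2 isT | PZ => @Ordinal 4 3 isT end.
Definition o2p (i : 'I_4) : option pauli :=
  match val i with 0 => Some PI | 1 => Some PX | 2 => Some PY | 3 => Some PZ | _ => None end.
Lemma p2oK : pcancel p2o o2p.
Proof. by case. Qed.
HB.instance Definition _ := Finite.copy pauli (pcan_type p2oK).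

Lemma card_pauli : #|{: pauli}| = 4.
Proof.
pose f (i : 'I_4) := match val i with 0 => PI | 1 => PX | 2 => PY | _ => PZ end.
have h1 : cancel p2o f by case.
have h2 : cancel f p2o.
  by case=> [[|[|[|[|k]]]] hk] //; apply: val_inj.
by rewrite -(card_ord 4); apply: bij_eq_card; exists f.
Qed.
Lemma card_nonI : #|predC1 PI| = 3.
Proof. by rewrite cardC1 card_pauli. Qed.

Definition pdec (P : Prop) : bool := if excluded_middle_informative P then true else false.
Lemma pdecP P : reflect P (pdec P).
Proof. by rewrite /pdec; case: excluded_middle_informative => h; constructor. Qed.

Lemma card_bigcup_le (T : finType) m (B : 'I_m -> {set T}) :
  #|\bigcup_(i < m) B i| <= \sum_(i < m) #|B i|.
Proof.
apply: (big_ind2 (fun (S : {set T}) k => #|S| <= k)).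
- by rewrite cards0.
- move=> A1 k1 A2 k2 h1 h2; apply: leq_trans (leq_card_setU A1 A2) _.
  exact: leq_add.
- by [].
Qed.

Definition FW n := [set t : {ffun 'I_n -> pauli} | [forall k, t k != PI]].

Lemma card_FW n : #|FW n| = 3 ^ n.
Proof.
rewrite -card_nonI -[in RHS](card_ord n) -card_ffun_on.
apply: eq_card => t; rewrite inE; apply/idP/idP => [/forallP h|/ffun_onP h].
  by apply/ffun_onP => k; rewrite inE h.
by apply/forallP => k; have := h k; rewrite inE.
Qed.

Definition oXY n (p0 : 'I_n) (P : pauli) := fun k => if k == p0 then P else PZ.

Lemma cgI g : cg g PI = PI. Proof. by case: g. Qed.

Lemma fiber_le2 n (p0 : 'I_n) V j :
  #|[set t in FW n | pdec (in_S p0 (readout p0 V j) (fun k => t k))]| <= 2.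
Proof.
pose tX := [ffun k => Fo p0 V j (oXY p0 PX) k].
pose tY := [ffun k => Fo p0 V j (oXY p0 PY) k].
apply: leq_trans (_ : #|[set tX; tY]| <= 2); last by rewrite cards2; case: (_ != _).
apply: subset_leq_card; apply/subsetP => t; rewrite !inE => /andP [/forallP hFW /pdecP hS].
have [o [[ho0 ho] ht]] := in_S_inv hS.
have hoZ : forall k, k != p0 -> o k = PZ.
  move=> k hk; case: (ho k hk) => // hI.
  have := hFW (swap_idx p0 j k); rewrite ht /Fo swap_idxK hI cgI.
  by rewrite eqxx.
have E : forall P, o p0 = P -> t = [ffun k => Fo p0 V j (oXY p0 P) k].
  move=> P hP; apply/ffunP => k; rewrite ffunE ht /Fo /oXY.
  case: (eqVneq (swap_idx p0 j k) p0) => [->|h]; first by rewrite hP.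
  by rewrite hoZ.
case: ho0 => /E ->; by rewrite eqxx ?orbT.
Qed.

Lemma lower_bound n (p0 : 'I_n) L : is_cover p0 L -> (3 ^ n + 1) %/ 2 <= size L.
Proof.
case=> _ hR hC.
pose d : op n := [ffun _ => 0%R].
have hR' : forall i : 'I_(size L), exists V j, nth d L i = readout p0 V j.
  by move=> i; apply: hR; rewrite mem_nth.
pose B (i : 'I_(size L)) :=
  [set t in FW n | pdec (in_S p0 (nth d L i) (fun k => t k))].
have sub : FW n \subset \bigcup_(i < size L) B i.
  apply/subsetP => t ht.
  have hn : nonidentity (fun k => t k).
    by exists p0; move: ht; rewrite inE => /forallP /(_ p0) /eqP.
  have [U hU hS] := hC _ hn.
  have hi : index U L < size L by rewrite index_mem.
  apply/bigcupP; exists (Ordinal hi) => //.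
  by rewrite inE ht /= nth_index //; apply/pdecP.
have h1 := leq_trans (subset_leq_card sub) (card_bigcup_le B).
have h2 : \sum_(i < size L) #|B i| <= \sum_(i < size L) 2.
  apply: leq_sum => i _; have [V [j hV]] := hR' i; rewrite /B hV; exact: fiber_le2.
rewrite sum_nat_const card_ord in h2; rewrite card_FW in h1.
have h3 := leq_trans h1 h2.
have ho : odd (3 ^ n) by rewrite oddX orbT.
move: ho h3; move: (3 ^ n) => a ho h3.
rewrite -(odd_double_half a) ho in h3 *.
rewrite -!muln2 in h3 *. lia.
Qed.

Definition gate_of (c : pauli) : gate :=
  match c with PX => GRy | PY => GRx | _ => GI end.
Definition oinv (g : gate) (P : pauli) : pauli :=
  match g, P with GRx, PZ => PY | GRy, PZ => PX | _, _ => P end.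

Lemma oinv_ok h P : h != PI -> P != PI -> P != h ->
  (oinv (gate_of h) P = PX \/ oinv (gate_of h) P = PY) /\
  cg (gate_of h) (oinv (gate_of h) P) = P.
Proof. by case: h; case: P => //=; auto. Qed.

Lemma cg_gate_of P : P != PI -> cg (gate_of P) PZ = P.
Proof. by case: P. Qed.

Lemma readout_ext n (p0 : 'I_n) V V' j : V =1 V' -> readout p0 V j = readout p0 V' j.
Proof.
move=> h; rewrite /readout; congr mulop.
by apply/ffunP => p; rewrite !ffunE; apply: eq_bigr => k _; rewrite h.
Qed.

Lemma cover_gen n (p0 : 'I_n) V j h s :
  nonidentity s -> V j = gate_of h -> h != PI -> s j != PI -> s j != h ->
  (forall k, k != j -> s k != PI -> V k = gate_of (s k)) ->
  in_S p0 (readout p0 V j) s.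
Proof.
move=> hs hVj hh hsj hsh hV.
have [o12 o3] := oinv_ok hh hsj hsh.
pose o := fun l => if l == p0 then oinv (gate_of h) (s j)
                   else if s (swap_idx p0 j l) == PI then PI else PZ.
apply: in_S_cover => //; exists o; split.
  split; first by rewrite /o eqxx.

  by move=> k /negbTE hk; rewrite /o hk; case: ifP; auto.
move=> k; rewrite /Fo /o swap_idx_p0 swap_idxK.
case: (eqVneq k j) => [->|hkj]; first by rewrite hVj o3.
case: (eqVneq (s k) PI) => [->|hk]; first by rewrite cgI.
by rewrite (hV k hkj hk) cg_gate_of.
Qed.


Definition gy n (p0 : 'I_n) (y : {ffun 'I_n -> pauli}) (k : 'I_n) : pauli :=
  if k == p0 then PZ else if y p0 == PZ then PX else PZ.
Definition mis n (p0 : 'I_n) (y : {ffun 'I_n -> pauli}) (k : 'I_n) : bool :=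
  y k != gy p0 y k.
Definition mpick n (p0 : 'I_n) (y : {ffun 'I_n -> pauli}) : option 'I_n :=
  [pick k | mis p0 y k && [forall l, mis p0 y l ==> (l <= k)%N]].

Lemma mpickS n (p0 : 'I_n) y m : mpick p0 y = Some m ->
  mis p0 y m /\ forall l, mis p0 y l -> (l <= m)%N.
Proof.
rewrite /mpick; case: pickP => // k /andP [hk /forallP hl] [<-]; split=> // l hml.
by have := hl l; rewrite hml.
Qed.

Lemma mpickN n (p0 : 'I_n) y : mpick p0 y = None -> forall l, ~~ mis p0 y l.
Proof.
rewrite /mpick; case: pickP => // hN _ l; apply/negP => hl.
case: (@arg_maxnP _ l (mis p0 y) val hl) => m hm hmax.
have := hN m; rewrite hm /=; move/negbT/negP; apply.
by apply/forallP => l'; apply/implyP => /hmax.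
Qed.

Definition jy n (p0 : 'I_n) y := if mpick p0 y is Some m then m else p0.
Definition hy n (p0 : 'I_n) y := if mpick p0 y is Some m then gy p0 y m else PY.
Definition Vy n (p0 : 'I_n) y :=
  fun k => if k == jy p0 y then gate_of (hy p0 y) else gate_of (y k).
Definition Uof n (p0 : 'I_n) y := readout p0 (Vy p0 y) (jy p0 y).

Definition other (c a : pauli) : pauli :=
  match c, a with
  | PX, PY => PZ | PY, PX => PZ | PX, PZ => PY | PZ, PX => PY
  | PY, PZ => PX | PZ, PY => PX | _, _ => a end.

Lemma other_ok c a : c != PI -> a != PI -> a != c ->
  [/\ other c a != PI, other c a != c, other c a != a & other c (other c a) = a].
Proof. by case: c; case: a. Qed.

Definition phi n (p0 : 'I_n) y : {ffun 'I_n -> pauli} :=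
  if mpick p0 y is Some m then [ffun k => if k == m then other (gy p0 y m) (y m) else y k]
  else y.

Lemma gy_neqI n (p0 : 'I_n) y k : gy p0 y k != PI.
Proof. by rewrite /gy; case: ifP => //; case: ifP. Qed.

Lemma gy_phi n (p0 : 'I_n) y : y \in FW n -> gy p0 (phi p0 y) =1 gy p0 y.
Proof.
rewrite inE => /forallP hy k; rewrite /phi.
case hm: (mpick p0 y) => [m|] //.
have [hmis _] := mpickS hm.
rewrite /gy ffunE; case: (eqVneq p0 m) => [e|] //.
subst m; move: hmis; rewrite /mis /gy eqxx => hne.
have [o1 o2 o3 _] := other_ok (isT : PZ != PI) (hy p0) hne.
by rewrite (negbTE o2) (negbTE hne).
Qed.

Lemma mis_phi n (p0 : 'I_n) y : y \in FW n -> mis p0 (phi p0 y) =1 mis p0 y.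
Proof.
move=> hF k; have hg := gy_phi p0 hF; move: hF; rewrite inE => /forallP hy.
rewrite /mis hg /phi.
case hm: (mpick p0 y) => [m|] //.
have [hmis _] := mpickS hm.
rewrite ffunE; case: (eqVneq k m) => [->|] //.
have [o1 o2 o3 _] := other_ok (gy_neqI p0 y m) (hy m) hmis.
by rewrite o2; move: hmis; rewrite /mis => ->.
Qed.

Lemma mpick_phi n (p0 : 'I_n) y : y \in FW n -> mpick p0 (phi p0 y) = mpick p0 y.
Proof.
move=> hF; rewrite /mpick; apply: eq_pick => k.
rewrite (mis_phi p0 hF k); congr (_ && _); apply: eq_forallb => l.
by rewrite (mis_phi p0 hF l).
Qed.

Lemma phi_FW n (p0 : 'I_n) y : y \in FW n -> phi p0 y \in FW n.
Proof.
move=> hF; have := hF; rewrite !inE => /forallP hy; rewrite /phi.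
case hm: (mpick p0 y) => [m|]; last by apply/forallP.
have [hmis _] := mpickS hm.
have [o1 o2 o3 _] := other_ok (gy_neqI p0 y m) (hy m) hmis.
by apply/forallP => k; rewrite ffunE; case: ifP.
Qed.

Lemma phiK n (p0 : 'I_n) y : y \in FW n -> phi p0 (phi p0 y) = y.
Proof.
move=> hF; have hg := gy_phi p0 hF; have hmp := mpick_phi p0 hF.
have := hF; rewrite inE => /forallP hy.
rewrite {1}/phi hmp /phi.
case hm: (mpick p0 y) => [m|] //.
have [hmis _] := mpickS hm.
have [o1 o2 o3 o4] := other_ok (gy_neqI p0 y m) (hy m) hmis.
apply/ffunP => k; rewrite !ffunE.
case: (eqVneq k m) => [->|] //.
rewrite eqxx.
have -> : gy p0 [ffun k0 => if k0 == m then other (gy p0 y m) (y m) else y k0] m = gy p0 y m.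
  by have := hg m; rewrite /phi hm.
by rewrite o4.
Qed.

Lemma Uof_phi n (p0 : 'I_n) y : y \in FW n -> Uof p0 (phi p0 y) = Uof p0 y.
Proof.
move=> hF; have hg := gy_phi p0 hF; have hmp := mpick_phi p0 hF.
rewrite /Uof /jy hmp; apply: readout_ext => k; rewrite /Vy /jy /hy hmp.
case hm: (mpick p0 y) => [m|]; last by rewrite /phi hm.
rewrite hg; case: ifP => // /negbT hk.
by rewrite /phi hm ffunE (negbTE hk).
Qed.

Definition spec n (p0 : 'I_n) : {ffun 'I_n -> pauli} := [ffun k => if k == p0 then PZ else PX].

Lemma phi_fix n (p0 : 'I_n) y : y \in FW n -> phi p0 y = y -> y = spec p0.
Proof.
move=> hF; have := hF; rewrite inE => /forallP hy.
rewrite /phi; case hm: (mpick p0 y) => [m|] => e.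
  have [hmis _] := mpickS hm.
  have [o1 o2 o3 _] := other_ok (gy_neqI p0 y m) (hy m) hmis.
  by move/ffunP: e => /(_ m); rewrite ffunE eqxx => /eqP; rewrite (negbTE o3).
have hN := mpickN hm.
have hp0 : y p0 = PZ by have := hN p0; rewrite /mis /gy eqxx negbK => /eqP.
apply/ffunP => k; rewrite ffunE.
have := hN k; rewrite /mis /gy hp0 eqxx negbK => /eqP ->.
by case: ifP.
Qed.

Definition Rset n (p0 : 'I_n) :=
  [set y in FW n | (enum_rank y <= enum_rank (phi p0 y))%N].

Lemma card_R n (p0 : 'I_n) : (#|Rset p0| * 2 <= 3 ^ n + 1)%N.
Proof.
set R := Rset p0.
have RF : R \subset FW n by apply/subsetP => y; rewrite inE => /andP [h _].
have inj : {in R &, injective (phi p0)}.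
  move=> y1 y2 h1 h2 e.
  by rewrite -(phiK p0 (subsetP RF _ h1)) e phiK // (subsetP RF _ h2).
have c1 : #|phi p0 @: R| = #|R| by rewrite card_in_imset.
have c2 : #|R :|: phi p0 @: R| <= 3 ^ n.
  rewrite -(card_FW n); apply: subset_leq_card; apply/subsetP => y.
  rewrite inE => /orP [/(subsetP RF) //|/imsetP [z hz ->]].
  exact: phi_FW (subsetP RF _ hz).
have c3 : #|R :&: phi p0 @: R| <= 1.
  rewrite -(cards1 (spec p0)); apply: subset_leq_card; apply/subsetP => y.
  rewrite in_setI => /andP [hy hz0]; case/imsetP: hz0 => z hz ez.
  have hyF := subsetP RF _ hy; have hzF := subsetP RF _ hz.
  move: hy hz; rewrite /R /Rset !in_set => /andP [_ r1] /andP [_ r2].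
  have ey : phi p0 y = z by rewrite ez phiK.
  rewrite ey in r1; rewrite -ez in r2.
  have yz : y = z by apply: enum_rank_inj; apply: val_inj; apply/eqP; rewrite /= eqn_leq r1 r2.
  by rewrite inE -(phi_fix hyF) // ey yz.
have := cardsUI R (phi p0 @: R); rewrite c1 => e.
lia.
Qed.

Lemma R_cover n (p0 : 'I_n) y : y \in FW n -> exists2 y', y' \in Rset p0 & Uof p0 y' = Uof p0 y.
Proof.
move=> hF; case: (leqP (enum_rank y) (enum_rank (phi p0 y))) => h.
  by exists y => //; rewrite inE hF.
exists (phi p0 y); last exact: Uof_phi.
by rewrite inE phi_FW //= phiK // ltnW.
Qed.

Definition ext0 n (p0 : 'I_n) (s : 'I_n -> pauli) : pauli :=
  if s p0 != PI then s p0
  else if [exists l, (s l != PI) && (s l != PZ)] then PX else PZ.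
Definition ext n (p0 : 'I_n) (s : 'I_n -> pauli) : {ffun 'I_n -> pauli} :=
  [ffun k => if s k != PI then s k else if k == p0 then ext0 p0 s
             else if ext0 p0 s == PZ then PX else PZ].

Lemma ext_FW n (p0 : 'I_n) s : ext p0 s \in FW n.
Proof.
rewrite inE; apply/forallP => k; rewrite ffunE /ext0.
case: ifP => // _; case: ifP => _; last by case: ifP.
by case: ifP => //; case: ifP.
Qed.

Lemma ext_cover n (p0 : 'I_n) s : val p0 = 0%N -> nonidentity s ->
  in_S p0 (Uof p0 (ext p0 s)) s.
Proof.
move=> hp0 hs; set y := ext p0 s.
have yT : forall k, s k != PI -> y k = s k by move=> k hk; rewrite /y ffunE hk.
set y0 := ext0 p0 s.
have yp0 : y p0 = y0 by rewrite /y ffunE eqxx /y0 /ext0; case: (s p0 != PI).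
have yN : forall k, k != p0 -> s k = PI -> y k = gy p0 y k.
  by move=> k hk hsk; rewrite /gy (negbTE hk) yp0 /y ffunE hsk /= (negbTE hk).
have key : s (jy p0 y) != PI /\ s (jy p0 y) != hy p0 y.
  rewrite /jy /hy; case hm: (mpick p0 y) => [m|].
    have [hmis hmax] := mpickS hm.
    have sm : s m != PI.
      apply/negP => /eqP sm.
      case: (eqVneq m p0) => [em|hmp]; last by move: hmis; rewrite /mis (yN m hmp sm) eqxx.
      subst m.
      have ysp : y p0 = PX.
        move: hmis; rewrite /mis /gy eqxx yp0 /y0 /ext0 sm eqxx /=.
        by case: ifP.
      move: ysp; rewrite yp0 /y0 /ext0 sm eqxx /=; case: existsP => // [[l /andP [hl1 hl2]]] _.
      have hl : l != p0 by apply/eqP => e; move: hl1; rewrite e sm eqxx.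
      have ex : [exists l, (s l != PI) && (s l != PZ)].
        by apply/existsP; exists l; rewrite hl1 hl2.
      have : mis p0 y l by rewrite /mis /gy (negbTE hl) yp0 /y0 /ext0 sm eqxx ex /= yT.
      move/hmax; rewrite (_ : nat_of_ord p0 = 0%N) // leqn0 => /eqP e.
      by move: hl; rewrite (_ : l = p0) ?eqxx //; apply: val_inj; rewrite /= e.
    split=> //; move: hmis; by rewrite /mis (yT m sm).
  have hN := mpickN hm.
  have yz : y p0 = PZ by have := hN p0; rewrite /mis /gy eqxx negbK => /eqP.
  have sp : s p0 != PI.
    apply/negP => /eqP sp.
    have [l /eqP hl] := hs.
    have hlp : l != p0 by apply/eqP => e; move: hl; rewrite e sp.
    have slZ : s l = PZ.
      apply/eqP; apply/negPn/negP => hZ.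
      have ex : [exists l, (s l != PI) && (s l != PZ)].
        by apply/existsP; exists l; rewrite hl hZ.
      by move: yz; rewrite yp0 /y0 /ext0 sp eqxx ex.
    have ylZ : y l = PZ by rewrite yT ?slZ.
    by have := hN l; rewrite /mis /gy (negbTE hlp) yz eqxx /= ylZ.
  by rewrite sp -(yT _ sp) yz.
apply: (@cover_gen _ _ _ _ (hy p0 y)) => //.
- by rewrite /Vy eqxx.
- by rewrite /hy; case: (mpick p0 y) => [m|] //; exact: gy_neqI.
- by case: key.
- by case: key.
- by move=> k hk hsk; rewrite /Vy (negbTE hk) yT.
Qed.

Theorem mainTheorem1 (n : nat) (hn : (0 < n)%N) :
  min_cover_card (Ordinal hn) ((3 ^ n + 1) %/ 2).
Proof.
set p0 := Ordinal hn.
split; last by move=> L; exact: lower_bound.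
pose L0 := undup [seq Uof p0 y | y <- enum (Rset p0)].
have hcov : is_cover p0 L0.
  split; first exact: undup_uniq.
    move=> U; rewrite mem_undup => /mapP [y _ ->].
    by exists (Vy p0 y), (jy p0 y).
  move=> s hs.
  have [y' hy' e] := R_cover p0 (ext_FW p0 s).
  exists (Uof p0 y'); first by rewrite mem_undup; apply: map_f; rewrite mem_enum.
  by rewrite e; apply: ext_cover.
exists L0; split=> //.
apply/eqP; rewrite eqn_leq (lower_bound hcov) andbT.
have h1 : (size L0 <= #|Rset p0|)%N.
  by rewrite cardE; apply: leq_trans (size_undup _) _; rewrite size_map.
have h2 := card_R p0.
move: h1 h2; move: (size L0) (#|Rset p0|) => a b h1 h2.
rewrite leq_divRL //; lia.
Qed.
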